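(* Let $X$ be a finite set with $|X|\ge5$, $k$ an integer with $5<k<|X|-5$, $\mathfrak{C}$ a nonempty symmetric family of choice functions for $\binom{X}{k}$, $\mathcal{F}$ the set of simple averaging functions for $\mathfrak{C}$, and assume $r(\mathcal{F})=2$. Let $a^*_1\ne a^*_2$ be elements of $X$. Then there is $f^*\in\mathcal{F}_{[2]}$ such that: $f^*(a^*_1,a^*_2)=a^*_2$; for $b_1\ne b_2$ with $\{b_1,b_2\}\subseteq\{a^*_1,a^*_2\}$, $f^*(b_1,b_2)=b_2$; and for $b_1\ne b_2$ with $\{b_1,b_2\}\not\subseteq\{a^*_1,a^*_2\}$, $f^*(b_1,b_2)=b_1$.
   Context: $\binom{X}{k}=\{Y\subseteq X:|Y|=k\}$; choice functions satisfy $c(Y)\in Y$. Symmetric: closed under $c\mapsto\pi*c$, $(\pi*c)(Y)=\pi^{-1}(c(\pi(Y)))$. $\mathcal{F}_{[r]}$: functions $f:X^r\to X$ with $f(a,\dots,a)=a$ such that for all $c_1,\dots,c_r\in\mathfrak{C}$, $Y\mapsto f(c_1(Y),\dots,c_r(Y))$ is in $\mathfrak{C}$. A monarchy is a projection. $r(\mathcal{F})=\min\{r:\text{some } f\in\mathcal{F}_{[r]}\text{ is not a monarchy}\}$. *)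

(* Defs.v *)
From mathcomp Require Import all_boot all_fingroup.
Set Implicit Arguments. Unset Strict Implicit. Unset Printing Implicit Defensive.

Notation ksub X k := {Y : {set X} | #|Y| == k}.

Definition is_choice (X : finType) (k : nat) (c : {ffun ksub X k -> X}) : Prop :=
  forall Y : ksub X k, c Y \in val Y.

(* The image pi(Y) as a k-subset (|pi(Y)| = |Y| since pi is injective). *)
Definition ksub_img (X : finType) (k : nat) (pi : {perm X}) (Y : ksub X k)
  : ksub X k := insubd Y (pi @: val Y).

Definition perm_act (X : finType) (k : nat) (pi : {perm X})
  (c : {ffun ksub X k -> X}) : {ffun ksub X k -> X} :=
  [ffun Y => (pi^-1)%g (c (ksub_img pi Y))].

Definition symmetric_family (X : finType) (k : nat)
  (C : {set {ffun ksub X k -> X}}) : Prop :=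
  forall (pi : {perm X}) c, c \in C -> perm_act pi c \in C.

Definition in_F (X : finType) (k r : nat) (C : {set {ffun ksub X k -> X}})
  (f : {ffun 'I_r -> X} -> X) : Prop :=
  (forall a : X, f [ffun _ => a] = a) /\
  (forall cs : 'I_r -> {ffun ksub X k -> X},
     (forall i, cs i \in C) ->
     [ffun Y => f [ffun i => cs i Y]] \in C).

Definition monarchy (X : finType) (r : nat) (f : {ffun 'I_r -> X} -> X) : Prop :=
  exists i : 'I_r, forall x, f x = x i.

Definition rF_eq (X : finType) (k : nat) (C : {set {ffun ksub X k -> X}})
  (n : nat) : Prop :=
  0 < n /\
  (exists f, in_F C f /\ ~ monarchy (r := n) f) /\
  (forall r, 0 < r < n -> forall f, in_F (r := r) C f -> monarchy f).

Definition pair2 (X : finType) (b1 b2 : X) : {ffun 'I_2 -> X} :=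
  [ffun i : 'I_2 => if val i == 0 then b1 else b2].

(* Main.v *)
Require Import Defs.
From mathcomp Require Import all_boot all_fingroup zify.
From Stdlib Require Import Classical.
Set Implicit Arguments. Unset Strict Implicit. Unset Printing Implicit Defensive.

Definition o0 : 'I_2 := ord0.
Definition o1 : 'I_2 := @Ordinal 2 1 isT.

Lemma pair2_0 (X : finType) (a b : X) : pair2 a b o0 = a.
Proof. by rewrite ffunE. Qed.
Lemma pair2_1 (X : finType) (a b : X) : pair2 a b o1 = b.
Proof. by rewrite ffunE. Qed.

Lemma ffun2_eq (X : finType) (z : {ffun 'I_2 -> X}) : z = pair2 (z o0) (z o1).
Proof.
apply/ffunP => i; rewrite ffunE; case: i => [[|[|m]] Hm] //=.
- by congr (z _); apply: val_inj.
- by congr (z _); apply: val_inj.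
Qed.

Lemma pair2_xx (X : finType) (a : X) : pair2 a a = [ffun _ => a].
Proof. by apply/ffunP => i; rewrite !ffunE; case: ifP. Qed.

Definition F2 (X : finType) (k : nat) (C : {set {ffun ksub X k -> X}})
  (f : {ffun 'I_2 -> X} -> X) := @in_F X k 2 C f.

Lemma F2_xx X k C f (hf : @F2 X k C f) a : f (pair2 a a) = a.
Proof. by rewrite pair2_xx; case: hf. Qed.

Definition comp2 (X : finType) (f g1 g2 : {ffun 'I_2 -> X} -> X) :=
  fun z => f (pair2 (g1 z) (g2 z)).

Lemma comp2_F X k C f g1 g2 : @F2 X k C f -> F2 C g1 -> F2 C g2 ->
  F2 C (comp2 f g1 g2).
Proof.
move=> [fid fcl] [g1id g1cl] [g2id g2cl]; split.
  by move=> a; rewrite /comp2 g1id g2id pair2_xx fid.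
move=> cs Hcs.
set d1 := [ffun Y => g1 [ffun i => cs i Y]].
set d2 := [ffun Y => g2 [ffun i => cs i Y]].
have := fcl (fun i : 'I_2 => if val i == 0 then d1 else d2).
have -> : [ffun Y => f [ffun i => (if val i == 0 then d1 else d2) Y]] =
  [ffun Y => comp2 f g1 g2 [ffun i => cs i Y]].
  apply/ffunP => Y; rewrite !ffunE /comp2; congr f; apply/ffunP => i.
  by rewrite !ffunE; case: ifP => _; rewrite ffunE.
apply => i; case: ifP => _; [exact: g1cl | exact: g2cl].
Qed.

Definition pr0 (X : finType) (z : {ffun 'I_2 -> X}) := z o0.
Definition pr1 (X : finType) (z : {ffun 'I_2 -> X}) := z o1.

Lemma pr0_F X k C : @F2 X k C (@pr0 X).
Proof.
split; first by move=> a; rewrite /pr0 ffunE.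
move=> cs Hcs; have -> : [ffun Y => pr0 [ffun i => cs i Y]] = cs o0.
  by apply/ffunP => Y; rewrite /pr0 /pr1 !ffunE.
exact: Hcs.
Qed.

Lemma pr1_F X k C : @F2 X k C (@pr1 X).
Proof.
split; first by move=> a; rewrite /pr1 ffunE.
move=> cs Hcs; have -> : [ffun Y => pr1 [ffun i => cs i Y]] = cs o1.
  by apply/ffunP => Y; rewrite /pr0 /pr1 !ffunE.
exact: Hcs.
Qed.

Lemma ksub_imgE (X : finType) k (pi : {perm X}) (Y : ksub X k) :
  val (ksub_img pi Y) = pi @: val Y.
Proof.
rewrite /ksub_img val_insubd card_imset; last exact: perm_inj.
by rewrite (valP Y).
Qed.

Lemma ksub_img_inv (X : finType) k (s : {perm X}) (Y : ksub X k) :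
  ksub_img s (ksub_img s^-1 Y) = Y.
Proof.
apply: val_inj; rewrite !ksub_imgE -imset_comp.
rewrite (eq_imset (g := id)) ?imset_id // => x /=.
by rewrite permKV.
Qed.

Definition conj2 (X : finType) (s : {perm X}) (f : {ffun 'I_2 -> X} -> X) :=
  fun z : {ffun 'I_2 -> X} => s (f [ffun i => (s^-1)%g (z i)]).

Lemma conj2_F X k C (hsym : symmetric_family C) s f :
  @F2 X k C f -> F2 C (conj2 s f).
Proof.
move=> [fid fcl]; split.
  move=> a; rewrite /conj2.
  have -> : [ffun i : 'I_2 => (s^-1)%g ([ffun _ : 'I_2 => a] i)] = [ffun _ : 'I_2 => (s^-1)%g a].
    by apply: eq_ffun => i; rewrite ffunE.
  by rewrite fid permKV.
move=> cs Hcs.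
set ds := fun i => perm_act s (cs i).
have Hd : forall i, ds i \in C by move=> i; apply: hsym.
have H := hsym (s^-1)%g _ (fcl ds Hd).
have -> : [ffun Y => conj2 s f [ffun i => cs i Y]] =
   perm_act s^-1 [ffun Y => f [ffun i => ds i Y]]; last exact: H.
apply/ffunP => Y; rewrite /perm_act !ffunE /conj2 invgK; congr (s (f _)).
by apply: eq_ffun => i; rewrite /ds /perm_act !ffunE ksub_img_inv.
Qed.

Lemma tperm_imset (X : finType) (x y : X) (A : {set X}) :
  x \in A -> y \in A -> tperm x y @: A = A.
Proof.
move=> xA yA; apply/eqP; rewrite eqEcard card_imset ?leqnn ?andbT;
  last exact: perm_inj.
apply/subsetP => z /imsetP [w wA ->].
by case: tpermP.
Qed.

Lemma choose_at X k (C : {set {ffun ksub X k -> X}}) (hC0 : C != set0)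
  (hCch : forall c, c \in C -> is_choice c) (hsym : symmetric_family C)
  (Y : ksub X k) u : u \in val Y -> exists2 c, c \in C & c Y = u.
Proof.
move=> uY; case/set0Pn: hC0 => c cC.
exists (perm_act (tperm (c Y) u) c); first exact: hsym.
rewrite /perm_act ffunE.
have -> : ksub_img (tperm (c Y) u) Y = Y.
  by apply: val_inj; rewrite ksub_imgE tperm_imset //; apply: hCch.
by rewrite tpermV tpermL.
Qed.

Lemma exists_ksub (X : finType) k (u v w : X) : u != v -> w != u -> w != v ->
  2 <= k -> k + 3 <= #|X| ->
  exists Y : ksub X k, [/\ u \in val Y, v \in val Y & w \notin val Y].
Proof.
move=> uv wu wv k2 kn.
set B := ~: [set u; v; w].
have cB : k - 2 <= #|B|.
  have := cardsC [set u; v; w]; rewrite -/B.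
  have : #|[set u; v; w]| <= 3.
    rewrite -setUA cardsU1 cards2; by case: (u \in _); case: (v != w).
  move=> h1 h2; move: kn; rewrite -h2; move: h1.
  move: #|[set u; v; w]| #|B| => a b; lia.
set s := take (k - 2) (enum B).
set S := [set x in s].
have sB : S \subset B.
  by apply/subsetP => x; rewrite inE => /mem_take; rewrite mem_enum.
have cS : #|S| = k - 2.
  rewrite cardsE; move/card_uniqP: (take_uniq (k - 2) (enum_uniq (mem B))).
  rewrite -/s => ->; rewrite size_take -cardE.
  by case: ltnP => // h; apply/eqP; rewrite eqn_leq cB h.
have uB : u \notin B by rewrite !inE eqxx.
have vB : v \notin B by rewrite !inE eqxx !orbT.
have wB : w \notin B by rewrite !inE eqxx !orbT.
have uS : u \notin S by apply: contra uB; apply: (subsetP sB).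
have vS : v \notin S by apply: contra vB; apply: (subsetP sB).
have wS : w \notin S by apply: contra wB; apply: (subsetP sB).
have cY : #|u |: (v |: S)| == k.
  rewrite cardsU1 cardsU1 in_setU1 negb_or uv uS vS cS /=; apply/eqP; lia.
exists (exist (fun Y : {set X} => #|Y| == k) _ cY); rewrite /= !in_setU1 !eqxx /= ?orbT; split => //.
by rewrite (negbTE wu) (negbTE wv) (negbTE wS).
Qed.

Lemma cons_F X k (C : {set {ffun ksub X k -> X}}) (hC0 : C != set0)
  (hCch : forall c, c \in C -> is_choice c) (hsym : symmetric_family C)
  (k2 : 2 <= k) (kn : k + 3 <= #|X|) f :
  F2 C f -> forall u v, f (pair2 u v) = u \/ f (pair2 u v) = v.
Proof.
move=> hf u v.
have [<-|uv] := eqVneq u v; first by left; exact: (F2_xx hf).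
have inY : forall Y : ksub X k, u \in val Y -> v \in val Y ->
    f (pair2 u v) \in val Y.
  move=> Y uY vY.
  have [c1 c1C c1Y] := choose_at hC0 hCch hsym uY.
  have [c2 c2C c2Y] := choose_at hC0 hCch hsym vY.
  have gC : [ffun Y => f [ffun i : 'I_2 => (if val i == 0 then c1 else c2) Y]] \in C.
    by apply: hf.2 => i; case: ifP.
  move: (hCch _ gC Y); rewrite ffunE.
  have -> : [ffun i : 'I_2 => (if val i == 0 then c1 else c2) Y] = pair2 u v.
    by apply: eq_ffun => i; case: ifP.
  done.
set w := f (pair2 u v).
have [wu|wu] := eqVneq w u; first by left.
have [wv|wv] := eqVneq w v; first by right.
have [Y [uY vY wY]] := exists_ksub uv wu wv k2 kn.
by move: wY; rewrite inY.
Qed.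

Definition Sep (X : finType) k (C : {set {ffun ksub X k -> X}}) (a b c d : X) :=
  exists h, F2 C h /\ h (pair2 a b) = b /\ h (pair2 c d) = c.

Lemma conj2_pair (X : finType) (s : {perm X}) h (x y : X) :
  conj2 s h (pair2 x y) = s (h (pair2 ((s^-1)%g x) ((s^-1)%g y))).
Proof.
rewrite /conj2; congr (s (h _)); apply: eq_ffun => i.
by rewrite !ffunE; case: ifP.
Qed.

Lemma Sep_perm X k C (hsym : symmetric_family C) (s : {perm X}) a b c d :
  @Sep X k C a b c d -> Sep C (s a) (s b) (s c) (s d).
Proof.
case=> h [hF [h1 h2]]; exists (conj2 s h); split; first exact: conj2_F.
by rewrite !conj2_pair !permK h1 h2.
Qed.

Lemma NS_map X k C (hsym : symmetric_family C) (s : {perm X}) a b c d a' b' c' d' :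
  ~ @Sep X k C a b c d -> s a = a' -> s b = b' -> s c = c' -> s d = d' ->
  ~ Sep C a' b' c' d'.
Proof.
move=> N <- <- <- <- S; apply: N.
by have := Sep_perm hsym (s^-1)%g S; rewrite !permK.
Qed.

Lemma Sep_rev X k C a b c d : @Sep X k C a b c d -> Sep C d c b a.
Proof.
case=> h [hF [h1 h2]]; exists (comp2 h (@pr1 X) (@pr0 X)); split.
  by apply: comp2_F => //; [exact: pr1_F | exact: pr0_F].
by rewrite /comp2 /pr0 /pr1 !pair2_0 !pair2_1 h1 h2.
Qed.

Lemma NS_rev X k C a b c d : ~ @Sep X k C a b c d -> ~ Sep C d c b a.
Proof. by move=> N /Sep_rev. Qed.

Lemma NS_trans X k C
  (hcons : forall h, F2 C h -> forall u v, h (pair2 u v) = u \/ h (pair2 u v) = v)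
  a b c d e f :
  ~ @Sep X k C a b e f -> ~ Sep C e f c d -> ~ Sep C a b c d.
Proof.
move=> N1 N2 [h [hF [h1 h2]]].
case: (hcons h hF e f) => he; [apply: N1 | apply: N2]; exists h; split => //.
Qed.

Lemma NS_irr (X : finType) k C (a b : X) : a != b -> ~ @Sep X k C a b a b.
Proof. by move=> ab [h [_ [h1 h2]]]; move: ab; rewrite -{1}h2 h1 eqxx. Qed.

Lemma perm_map (X : finType) (s t : seq X) : uniq s -> uniq t ->
  size s = size t -> exists p : {perm X}, map p s = t.
Proof.
elim: s t => [|x s IH] [|y t] //=.
  by move=> _ _ _; exists 1%g.
move=> /andP [xs us] /andP [yt ut] [st].
have [p pst] := IH t us ut st.
exists (p * tperm (p x) y)%g; rewrite permM tpermL; congr cons.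
rewrite -pst; apply/eq_in_map => z zs /=; rewrite permM tpermD //.
  by apply: contraNneq xs => /perm_inj ->.
by apply: contraNneq yt => ->; rewrite -pst map_f.
Qed.

Lemma perm3 (X : finType) (x1 x2 x3 y1 y2 y3 : X) :
  uniq [:: x1; x2; x3] -> uniq [:: y1; y2; y3] ->
  exists p : {perm X}, [/\ p x1 = y1, p x2 = y2 & p x3 = y3].
Proof. by move=> u1 u2; have [p [h1 h2 h3]] := perm_map u1 u2 erefl; exists p. Qed.

Lemma perm4 (X : finType) (x1 x2 x3 x4 y1 y2 y3 y4 : X) :
  uniq [:: x1; x2; x3; x4] -> uniq [:: y1; y2; y3; y4] ->
  exists p : {perm X}, [/\ p x1 = y1, p x2 = y2, p x3 = y3 & p x4 = y4].
Proof. by move=> u1 u2; have [p [h1 h2 h3 h4]] := perm_map u1 u2 erefl; exists p. Qed.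

Lemma fresh (X : finType) (s : seq X) : size s < #|X| -> exists e, e \notin s.
Proof.
move=> hs; case: (pickP (fun e => e \notin s)) => [e he|h]; first by exists e.
have : #|X| <= #|s|.
  apply: subset_leq_card; apply/subsetP => x _; move: (h x) => /= /negbFE.
  done.
by move=> /leq_trans /(_ (card_size s)); rewrite leqNgt hs.
Qed.

Ltac dist := rewrite /= ?inE ?negb_or ?andbT; repeat (apply/andP; split);
  try done; rewrite eq_sym; done.

Lemma fresh5 (X : finType) (n5 : 5 <= #|X|) (s : seq X) :
  size s <= 4 -> exists e, e \notin s.
Proof. by move=> hs; apply: fresh; apply: leq_ltn_trans hs n5. Qed.

Lemma core (X : finType) k (C : {set {ffun ksub X k -> X}}) (hsym : symmetric_family C)
  (hcons : forall h, F2 C h -> forall u v, h (pair2 u v) = u \/ h (pair2 u v) = v)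
  (n5 : 5 <= #|X|) p1 p2 q1 q2 (p12 : p1 != p2) (q12 : q1 != q2)
  (Hs : Sep C p1 p2 q1 q2) (a b c d : X) :
  a != b -> c != d -> ~ (c = a /\ d = b) -> ~ (c = b /\ d = a) -> Sep C a b c d.
Proof.
move=> ab cd H1 H2; apply: NNPP => N.
have tr := NS_trans hcons.
have T1i : exists x0 y0 z0, [/\ x0 != y0, x0 != z0, y0 != z0 & ~ Sep C x0 y0 x0 z0].
  have [ca|ca] := eqVneq c a.
    subst c; have db : d != b by apply/eqP => E; apply: H1.
    by exists a, b, d; split => //; rewrite eq_sym.
  have [db|db] := eqVneq d b.
    subst d; exists b, c, a; split => //; try by rewrite eq_sym.
    exact: NS_rev N.
  have [cb|cb] := eqVneq c b.
    subst c; have da : d != a by apply/eqP => E; apply: H2.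
    have [e he] := @fresh5 X n5 [:: a; b; d] isT.
    move: he; rewrite !inE !negb_or => /and3P [ea eb ed].
    have [p1' [ha hb hd]] := perm3 (x1 := a) (x2 := b) (x3 := d) (y1 := a) (y2 := b) (y3 := e) ltac:(dist) ltac:(dist).
    have N1 := NS_map hsym N ha hb hb hd.
    have [p2' [ha2 hb2 hd2]] := perm3 (x1 := a) (x2 := b) (x3 := d) (y1 := b) (y2 := e) (y3 := a) ltac:(dist) ltac:(dist).
    have N2 := NS_map hsym N ha2 hb2 hb2 hd2.
    have [p3' [ha3 hb3 hd3]] := perm3 (x1 := a) (x2 := b) (x3 := d) (y1 := e) (y2 := a) (y3 := d) ltac:(dist) ltac:(dist).
    have N3 := NS_map hsym N ha3 hb3 hb3 hd3.
    exists a, b, d; split => //; try by rewrite eq_sym.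
    exact: (tr _ _ _ _ _ _ (tr _ _ _ _ _ _ N1 N2) N3).
  have [da|da] := eqVneq d a.
    subst d.
    have [e he] := @fresh5 X n5 [:: a; b; c] isT.
    move: he; rewrite !inE !negb_or => /and3P [ea eb ec].
    have [p1' [ha hb hc]] := perm3 (x1 := a) (x2 := b) (x3 := c) (y1 := c) (y2 := a) (y3 := b) ltac:(dist) ltac:(dist).
    have N1 := NS_map hsym N ha hb hc ha.
    have [p2' [ha2 hb2 hc2]] := perm3 (x1 := a) (x2 := b) (x3 := c) (y1 := b) (y2 := c) (y3 := e) ltac:(dist) ltac:(dist).
    have N2 := NS_map hsym N ha2 hb2 hc2 ha2.
    exists b, e, a; split => //; try by rewrite eq_sym.
    apply: NS_rev; exact: (tr _ _ _ _ _ _ (tr _ _ _ _ _ _ N N1) N2).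
  have [e he] := @fresh5 X n5 [:: a; b; c; d] isT.
  move: he; rewrite !inE !negb_or => /and4P [ea eb ec ed].
  have [p1' [ha hb hc hd]] := perm4 (x1 := a) (x2 := b) (x3 := c) (x4 := d) (y1 := c) (y2 := d) (y3 := a) (y4 := e) ltac:(dist) ltac:(dist).
  have N1 := NS_map hsym N ha hb hc hd.
  exists a, b, e; split => //; try by rewrite eq_sym.
  exact: (tr _ _ _ _ _ _ N N1).
have T1 : forall x y z, x != y -> x != z -> y != z -> ~ Sep C x y x z.
  move=> x y z xy xz yz.
  case: T1i => x0 [y0 [z0 [h1 h2 h3 N0]]].
  have [p [hx hy hz]] := perm3 (x1 := x0) (x2 := y0) (x3 := z0) (y1 := x) (y2 := y) (y3 := z) ltac:(dist) ltac:(dist).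
  exact (NS_map hsym N0 hx hy hx hz).
have T2 : forall x y z, x != y -> x != z -> y != z -> ~ Sep C y x z x.
  move=> x y z xy xz yz /Sep_rev; apply: (T1 x z y) => //; by rewrite eq_sym.
have All : forall x y z w, x != y -> z != w -> ~ Sep C x y z w.
  move=> x y z w xy zw.
  have [e he] := @fresh5 X n5 [:: x; y; z; w] isT.
  move: he; rewrite !inE !negb_or => /and4P [ex ey ez ew].
  have N1 : ~ Sep C x y x e by apply: T1 => //; rewrite eq_sym.
  have N2 : ~ Sep C x e z e.
    have [<-|xz] := eqVneq x z; first by apply: NS_irr; rewrite eq_sym.
    by apply: T2 => //; rewrite eq_sym.
  have N3 : ~ Sep C z e z w by apply: T1 => //; rewrite eq_sym.
  exact: (tr _ _ _ _ _ _ (tr _ _ _ _ _ _ N1 N2) N3).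
exact: All p12 q12 Hs.
Qed.

Theorem claim13p4 (X : finType) (k : nat) (C : {set {ffun ksub X k -> X}})
  (hX : 5 <= #|X|) (hk1 : 5 < k) (hk2 : k + 5 < #|X|)
  (hC0 : C != set0) (hCch : forall c, c \in C -> is_choice c)
  (hsym : symmetric_family C) (hr : rF_eq C 2)
  (a1 a2 : X) (ha : a1 != a2) :
  exists f : {ffun 'I_2 -> X} -> X,
    in_F C f /\
    f (pair2 a1 a2) = a2 /\
    (forall b1 b2 : X, b1 != b2 -> b1 \in [set a1; a2] -> b2 \in [set a1; a2] ->
       f (pair2 b1 b2) = b2) /\
    (forall b1 b2 : X, b1 != b2 -> ~~ ((b1 \in [set a1; a2]) && (b2 \in [set a1; a2])) ->
       f (pair2 b1 b2) = b1).
Proof.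
have k2 : 2 <= k by lia.
have kn : k + 3 <= #|X| by lia.
have hcons := cons_F hC0 hCch hsym k2 kn.
case: hr => _ [[f [hf nm]] _].
have hfF : F2 C f := hf.
have [u [v [uv fuv]]] : exists u v, u != v /\ f (pair2 u v) = v.
  apply: NNPP => H; apply: nm; exists o0 => z.
  rewrite {1}(ffun2_eq z).
  case: (hcons f hfF (z o0) (z o1)) => // E.
  have [E'|ne] := eqVneq (z o0) (z o1); first by rewrite E E'.
  by exfalso; apply: H; exists (z o0), (z o1).
have [u' [v' [uv' fuv']]] : exists u v, u != v /\ f (pair2 u v) = u.
  apply: NNPP => H; apply: nm; exists o1 => z.
  rewrite {1}(ffun2_eq z).
  case: (hcons f hfF (z o0) (z o1)) => // E.
  have [E'|ne] := eqVneq (z o0) (z o1); first by rewrite E E'.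
  by exfalso; apply: H; exists (z o0), (z o1).
have Hs : Sep C u v u' v' by exists f.
have U : forall c d, c != d -> ~ (c = a1 /\ d = a2) -> ~ (c = a2 /\ d = a1) ->
    exists h, F2 C h /\ h (pair2 a1 a2) = a2 /\ h (pair2 a2 a1) = a1 /\
      h (pair2 c d) = c.
  move=> c d cd H1 H2.
  have [g1 [g1F [g11 g12]]] := core hsym hcons hX uv uv' Hs ha cd H1 H2.
  have [g2 [g2F [g21 g22]]] := core hsym hcons hX uv uv' Hs (b := a1) (a := a2)
     ltac:(by rewrite eq_sym) cd H2 H1.
  exists (comp2 g1 g2 (@pr1 X)); split.
    by apply: comp2_F => //; exact: pr1_F.
  rewrite /comp2 /pr1 !pair2_1 g21 g22 g12 (F2_xx g1F); split => //.
  by case: (hcons g2 g2F a1 a2) => ->; rewrite ?g11 ?(F2_xx g1F).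
have Ind : forall s : seq (X * X), exists h, F2 C h /\ h (pair2 a1 a2) = a2 /\
    h (pair2 a2 a1) = a1 /\ forall p, p \in s -> p.1 != p.2 ->
    ~ (p.1 = a1 /\ p.2 = a2) -> ~ (p.1 = a2 /\ p.2 = a1) -> h (pair2 p.1 p.2) = p.1.
  elim => [|p s [h [hF [h1 [h2 hs]]]]].
    exists (@pr1 X); split; first exact: pr1_F.
    by rewrite /pr1 !pair2_1.
  case: (classic (p.1 != p.2 /\ ~ (p.1 = a1 /\ p.2 = a2) /\ ~ (p.1 = a2 /\ p.2 = a1)))
    => [[pn [P1 P2]]|nP].
    have [g [gF [g1 [g2 g3]]]] := U _ _ pn P1 P2.
    exists (comp2 g (@pr0 X) h); split.
      by apply: comp2_F => //; exact: pr0_F.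
    rewrite /comp2 /pr0 !pair2_0 h1 h2 g1 g2; split => //; split => //.
    move=> q; rewrite inE => /orP [/eqP ->|qs] qn Q1 Q2.
      by rewrite pair2_0; case: (hcons h hF p.1 p.2) => ->; rewrite ?g3 ?(F2_xx gF).
    by rewrite pair2_0 hs // (F2_xx gF).
  exists h; split => //; split => //; split => //.
  move=> q; rewrite inE => /orP [/eqP ->|qs] qn Q1 Q2; last exact: hs.
  by exfalso; apply: nP.
have [h [hF [h1 [h2 hs]]]] := Ind (enum [set: X * X]).
exists h; split; first exact: hF.
split => //; split.
  move=> b1 b2 b12; rewrite !in_set2 => /orP [] /eqP E1 /orP [] /eqP E2;
    subst; rewrite ?eqxx // in b12.
move=> b1 b2 b12 nb.
apply: (hs (b1, b2)) => //=; first by rewrite mem_enum in_setT.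
  by case=> E1 E2; move: nb; rewrite E1 E2 !in_set2 !eqxx ?orbT.
by case=> E1 E2; move: nb; rewrite E1 E2 !in_set2 !eqxx ?orbT.
Qed.
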